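(* Let $D=(E,\mathcal{F})$ be a normal binary delta-matroid. Then the twist polynomial ${}^{\partial}w_{D}(z)$ has a non-zero constant term (i.e. $w(D*A)=0$ for some $A\subseteq E$) if and only if the intersection graph $G_D$ is a bipartite graph (in particular has no loops).
   Context: A delta-matroid is a set system $(E,\mathcal{F})$, $\mathcal{F}\ne\emptyset$ a family of subsets of finite $E$, satisfying: for all $X,Y\in\mathcal{F}$ and $u\in X\Delta Y$ there is $v\in X\Delta Y$ with $X\Delta\{u,v\}\in\mathcal{F}$. Twist: $D*A=(E,\{A\Delta X:X\in\mathcal{F}\})$. Width $w(D)$ = maximum minus minimum cardinality of feasible sets; twist polynomial ${}^{\partial}w_{D}(z)=\sum_{A\subseteq E}z^{w(D*A)}$. $D$ is normal if $\emptyset\in\mathcal{F}$. For a symmetric matrix $C$ over $GF(2)$ indexed by $E$, $D(C)=(E,\{A\subseteq E: C[A]\text{ nonsingular}\})$ ($C[A]$ principal submatrix, $C[\emptyset]$ nonsingular by convention). $D$ is binary if some twist of it is isomorphic to some $D(C)$. A normal binary $D$ equals $D(C)$ for a unique symmetric $C$; its intersection graph $G_D$ has vertex set $E$, distinct $u,v$ adjacent iff $C_{u,v}=1$, and a loop at $v$ iff $C_{v,v}=1$. *)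

(* Defs.v *)
From mathcomp Require Import all_boot all_order all_algebra.
Set Implicit Arguments. Unset Strict Implicit. Unset Printing Implicit Defensive.
Import GRing.Theory.
Local Open Scope ring_scope.

Definition symdiff (E : finType) (X Y : {set E}) : {set E} := (X :\: Y) :|: (Y :\: X).

Definition is_delta_matroid (E : finType) (F : {set {set E}}) : Prop :=
  F != set0 /\
  forall X Y, X \in F -> Y \in F -> forall u, u \in symdiff X Y ->
    exists2 v, v \in symdiff X Y & symdiff X [set u; v] \in F.

Definition twist (E : finType) (F : {set {set E}}) (A : {set E}) : {set {set E}} :=
  [set symdiff A X | X in F].

Definition width (E : finType) (F : {set {set E}}) : nat :=
  ((\max_(X in F) #|X|) - \big[minn/#|E|]_(X in F) #|X|)%N.

Definition twist_poly (E : finType) (F : {set {set E}}) : {poly int} :=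
  \sum_(A : {set E}) 'X^(width (twist F A)).

Definition is_normal (E : finType) (F : {set {set E}}) : Prop := set0 \in F.

Definition symmetric_mx (E : finType) (C : E -> E -> 'F_2) : Prop :=
  forall u v, C u v = C v u.

Definition principal_submx (E : finType) (C : E -> E -> 'F_2) (A : {set E})
  : 'M['F_2]_#|A| :=
  \matrix_(i < #|A|, j < #|A|) C (enum_val i) (enum_val j).

(* C[A] nonsingular; for A = set0 the 0x0 determinant is 1, so it is nonsingular *)
Definition nonsingular_principal (E : finType) (C : E -> E -> 'F_2) (A : {set E}) : bool :=
  \det (principal_submx C A) != 0.

Definition DC (E : finType) (C : E -> E -> 'F_2) : {set {set E}} :=
  [set A : {set E} | nonsingular_principal C A].

(* Since isomorphic set systems have equinumerous ground sets, it suffices to take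
   C indexed by E itself and the isomorphism a bijection E -> E. *)
Definition is_binary (E : finType) (F : {set {set E}}) : Prop :=
  exists (A : {set E}) (C : E -> E -> 'F_2) (f : E -> E),
    [/\ symmetric_mx C, bijective f & twist F A = [set f @: X | X : {set E} in DC C]].

(* intersection graph of D = D(C): u ~ v (u <> v) iff C u v = 1; loop at v iff C v v = 1.
   We record the adjacency relation including loops. *)
Definition ig_adj (E : finType) (C : E -> E -> 'F_2) (u v : E) : bool := C u v == 1.

(* bipartite (as a graph possibly with loops): a 2-colouring in which every
   edge (including loops) joins vertices of different colours. *)
Definition bipartite (E : finType) (adj : E -> E -> bool) : Prop :=
  exists c : E -> bool, forall u v, adj u v -> c u != c v.

(* Main.v *)
Require Import Defs.
From mathcomp Require Import all_boot all_order all_algebra.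
From mathcomp Require Import zify all_fingroup.
Import GRing.Theory Num.Theory.
Local Open Scope ring_scope.

Lemma F2_neq0 (x : 'F_2) : x != 0 -> x = 1.
Proof. case: x => [[|[|n]]] //= Hx. move=> _; exact: val_inj. Qed.

Lemma det_castmx (R : comRingType) n m (h : n = m) (M : 'M[R]_n) :
  \det (castmx (h,h) M) = \det M.
Proof. by case: m / h; rewrite castmx_id. Qed.

Lemma det2 (R : comRingType) (M : 'M[R]_2) :
  \det M = M 0 0 * M 1 1 - M 0 1 * M 1 0.
Proof.
rewrite (expand_det_row _ 0) !big_ord_recl big_ord0 /cofactor !det_mx11 /=.
rewrite !mxE /=.
try (rewrite (_ : @lift 2 0 0 = 1); last exact: val_inj).
try (rewrite (_ : @lift 2 (@ord0 1) 0 = 1); last exact: val_inj).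
try (rewrite (_ : @lift 2 (@ord0 1) (@ord0 0) = 1); last exact: val_inj).
try (rewrite (_ : @lift 2 1 0 = 0); last exact: val_inj).
try (rewrite (_ : @ord0 1 = 0); last exact: val_inj).
by rewrite /= expr0 expr1 mul1r addr0 mulN1r mulrN.
Qed.

Section S.
Variable E : finType.
Implicit Types (A X Y : {set E}) (C : E -> E -> 'F_2).

Lemma det_single C v : \det (principal_submx C [set v]) = C v v.
Proof.
rewrite -(@det_castmx _ _ _ (cards1 v)) det_mx11 castmxE mxE.
set x := enum_val _.
have : x \in [set v] by apply: enum_valP.
by rewrite inE => /eqP ->.
Qed.

Lemma det_pair C u v : symmetric_mx C -> u != v -> C u u = 0 -> C v v = 0 ->
  C u v = 1 -> \det (principal_submx C [set u; v]) != 0.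
Proof.
move=> Cs uv Cuu Cvv Cuv.
have h : #|[set u; v]| = 2%N by rewrite cards2 uv.
rewrite -(@det_castmx _ _ _ h) det2 !castmxE !mxE.
set x := enum_val (cast_ord _ 0); set y := enum_val (cast_ord _ 1).
have xy : x != y.
  by apply/eqP => /enum_val_inj /(congr1 val).
have : x \in [set u; v] by apply: enum_valP.
have : y \in [set u; v] by apply: enum_valP.
rewrite !inE.
have diag : forall w, (w == u) || (w == v) -> C w w = 0.
  by move=> w /orP [] /eqP ->.
move=> Hy Hx; rewrite (diag _ Hx) (diag _ Hy) mul0r sub0r oppr_eq0.
have off : forall a b, (a == u) || (a == v) -> (b == u) || (b == v) -> a != b -> C a b = 1.
  move=> a b /orP [] /eqP -> /orP [] /eqP -> //; rewrite ?eqxx //.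
  by rewrite Cs.
by rewrite (off x y) // (off y x) // 1?eq_sym // mulr1 oner_eq0.
Qed.

Lemma card_symdiff A X : #|symdiff A X| = (#|A :\: X| + #|X :\: A|)%N.
Proof.
rewrite /symdiff cardsU.
have -> : (A :\: X) :&: (X :\: A) = set0.
  by apply/setP => x; rewrite !inE; case: (x \in A); case: (x \in X).
by rewrite cards0 subn0.
Qed.

Lemma symdiff_card A X : #|symdiff A X| = #|A| <-> #|X :\: A| = #|A :&: X|.
Proof.
rewrite card_symdiff -(cardsID X A); lia.
Qed.

Lemma bigmin_le (I : eqType) (r : seq I) (P : pred I) (f : I -> nat) k i :
  i \in r -> P i -> (\big[minn/k]_(j <- r | P j) f j <= f i)%N.
Proof.
elim: r => [|a r IH] //; rewrite big_cons in_cons.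
case/orP => [/eqP ->|ir] Pi; first by rewrite Pi geq_minl.
case: (P a); last exact: IH.
exact: leq_trans (geq_minr _ _) (IH ir Pi).
Qed.

Lemma width_eq0 (F' : {set {set E}}) Y0 : Y0 \in F' ->
  width F' = 0%N <-> (forall Y, Y \in F' -> #|Y| = #|Y0|).
Proof.
move=> Y0F; rewrite /width; split.
- move=> /eqP; rewrite subn_eq0 => H.
  have Hmax : forall Y, Y \in F' -> (#|Y| <= \max_(X in F') #|X|)%N.
    by move=> Y YF; apply: leq_bigmax_cond.
  have Hmin : forall Y, Y \in F' -> (\big[minn/#|E|]_(X in F') #|X| <= #|Y|)%N.
    by move=> Y YF; apply: bigmin_le => //; rewrite mem_index_enum.
  move=> Y YF; apply/eqP; rewrite eqn_leq.
  rewrite (leq_trans (Hmax _ YF) (leq_trans H (Hmin _ Y0F))) /=.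
  exact: (leq_trans (Hmax _ Y0F) (leq_trans H (Hmin _ YF))).
- move=> H; apply/eqP; rewrite subn_eq0.
  apply: (@leq_trans #|Y0|).
    by apply/bigmax_leqP => Y YF; rewrite H.
  apply: (big_ind (fun m => #|Y0| <= m)%N).
  + exact: max_card.
  + by move=> a b Ha Hb; rewrite leq_min Ha Hb.
  + by move=> Y YF; rewrite H.
Qed.

Lemma coef0_twist (F : {set {set E}}) :
  (twist_poly F)`_0 != 0 <-> exists A, width (twist F A) = 0%N.
Proof.
rewrite /twist_poly coef_sum.
rewrite (eq_bigr (fun A => ((width (twist F A) == 0%N) : nat)%:R)); last first.
  by move=> A _; rewrite coefXn eq_sym.
rewrite -natr_sum pnatr_eq0 sum_nat_eq0.
split.
- case/forallPn => A /=; rewrite eqb0 negbK => /eqP; by exists A.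
- case=> A HA; apply/forallPn; exists A; by rewrite /= HA.
Qed.

Lemma card_sub_enum X (Q : pred E) :
  #|[set i : 'I_#|X| | Q (enum_val i)]| = #|[set x in X | Q x]|.
Proof.
have -> : [set x in X | Q x] = enum_val @: [set i : 'I_#|X| | Q (enum_val i)].
  apply/setP => x; rewrite inE; apply/andP/imsetP.
  - case=> xX Qx; exists (enum_rank_in xX x); last by rewrite enum_rankK_in.
    by rewrite inE enum_rankK_in.
  - case=> i; rewrite inE => Qi ->; split => //; exact: enum_valP.
by rewrite card_imset //; exact: enum_val_inj.
Qed.

Lemma bip_card C (c : E -> bool) X :
  (forall u v, ig_adj C u v -> c u != c v) ->
  nonsingular_principal C X ->
  #|[set x in X | c x]| = #|[set x in X | ~~ c x]|.
Proof.
move=> Hc; rewrite /nonsingular_principal.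
set M := principal_submx C X.
case: (pickP (fun s : 'S_(#|X|) => \prod_i M i (s i) != 0)) => [s Hs|H0]; last first.
  rewrite /determinant big1 ?eqxx // => s _.
  by move: (H0 s) => /negbFE /eqP ->; rewrite mulr0.
move=> _.
have Hi : forall i, c (enum_val i) != c (enum_val (s i)).
  move=> i; apply: Hc; rewrite /ig_adj.
  have : M i (s i) != 0.
    by apply: contra Hs => /eqP Z; rewrite (bigD1 i) //= Z mul0r eqxx.
  by rewrite /M /principal_submx mxE => /F2_neq0 ->.
rewrite -(card_sub_enum X c) -(card_sub_enum X (fun x => ~~ c x)).
set IP := [set i : 'I_#|X| | c (enum_val i)].
set IQ := [set i : 'I_#|X| | ~~ c (enum_val i)].
have s_inj : injective s by exact: perm_inj.
apply/eqP; rewrite eqn_leq; apply/andP; split.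
- rewrite -(card_imset IP s_inj); apply: subset_leq_card.
  apply/subsetP => j /imsetP [i]; rewrite !inE => ci ->.
  by move: (Hi i); rewrite ci; case: (c _).
- rewrite -(card_imset IQ s_inj); apply: subset_leq_card.
  apply/subsetP => j /imsetP [i]; rewrite !inE => ci ->.
  by move: (Hi i); move: ci; case: (c _); case: (c _).
Qed.

End S.

Theorem mainTheorem8 (E : finType) (F : {set {set E}}) (C : E -> E -> 'F_2) :
  is_delta_matroid F -> is_normal F -> is_binary F ->
  symmetric_mx C -> F = DC C ->
  ((twist_poly F)`_0 != 0 <-> bipartite (ig_adj C)).
Proof.
move=> _ Hn _ Cs HF; rewrite coef0_twist.
have A0 : forall A, A \in twist F A.
  move=> A; apply/imsetP; exists set0 => //.
  by apply/setP => x; rewrite /symdiff !inE; case: (x \in A).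
subst F.
split.
- case=> A /(@width_eq0 _ _ _ (A0 A)).1 HA.
  have Hall : forall X, X \in DC C -> #|X :\: A| = #|A :&: X|.
    move=> X XF; apply/symdiff_card; apply: HA; exact: imset_f.
  have noloop : forall w, C w w = 0.
    move=> w; apply/eqP; apply/negP => /negP /F2_neq0 Cw.
    have : [set w] \in DC C by rewrite inE /nonsingular_principal det_single Cw oner_eq0.
    move/Hall; have := cardsID A [set w]; rewrite cards1 setIC; lia.
  exists (fun x => x \in A) => u v; rewrite /ig_adj => /eqP Cuv.
  have uv : u != v by apply: contra_eq_neq Cuv => ->; rewrite noloop.
  have : [set u; v] \in DC C by rewrite inE /nonsingular_principal det_pair ?noloop.
  move/Hall; have := cardsID A [set u; v]; rewrite cards2 uv setIC => H1 H2.
  case Hu: (u \in A); case Hv: (v \in A) => //.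
  + have : [set u; v] :\: A = set0.
      apply/setP => x; rewrite !inE; case: (x =P u) => [->|]; rewrite ?Hu ?andbF //.
      by case: (x =P v) => [->|]; rewrite ?Hv ?andbF.
    move=> E0; move: H1 H2; rewrite E0 cards0; lia.
  + have : [set u; v] :&: A = set0.
      apply/setP => x; rewrite !inE; case: (x =P u) => [->|]; rewrite ?Hu ?andbF //.
      by case: (x =P v) => [->|]; rewrite ?Hv ?andbF.
    move=> E0; move: H1 H2; rewrite setIC E0 cards0; lia.
- case=> c Hc; exists [set x | c x].
  apply/(@width_eq0 _ _ _ (A0 _)).2 => Y /imsetP [X XF ->].
  apply/symdiff_card.
  have -> : X :\: [set x | c x] = [set x in X | ~~ c x].
    by apply/setP => x; rewrite !inE andbC.
  have -> : [set x | c x] :&: X = [set x in X | c x].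
    by apply/setP => x; rewrite !inE andbC.
  symmetry; apply: (@bip_card _ C c X Hc); by move: XF; rewrite inE.
Qed.
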